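(* Let $\mathcal{C} \subseteq \mathbb{R}^n$ be a polyhedron with nonempty interior, and let $Z$ be a random vector in $\mathbb{R}^n$ with $\mathbb{E}Z = 0$ and $\mathbb{E}\|Z\|^2 < \infty$. Let $\theta_0 \in \mathcal{C}$ and suppose $\mathbb{P}(Z \in \mathrm{int}\, T_{\mathcal{C}}(\theta_0)) > 0$. Then $$\sup_{\theta^* \notin \mathcal{C} :\ \Pi_{\mathcal{C}}(\theta^* ) = \theta_0} \delta\big(T_{\mathcal{C}}(\Pi_{\mathcal{C}}(\theta^* )) \cap (\theta^* - \Pi_{\mathcal{C}}(\theta^* ))^\perp\big) < \delta(T_{\mathcal{C}}(\theta_0)).$$
   Context: A polyhedron is a set $\{x : Ax \le b\}$. $\Pi_{\mathcal{C}}$ is Euclidean projection onto $\mathcal{C}$; $v^\perp = \{u:\langle u,v\rangle=0\}$; $T_{\mathcal{C}}(\theta_0) = \mathrm{cl}\{\alpha(\theta-\theta_0): \alpha\ge0, \theta\in\mathcal{C}\}$ is the tangent cone. For a closed convex cone $T$, $\delta(T) = \mathbb{E}\|\Pi_T(Z)\|^2$ (generalized statistical dimension with respect to the distribution of $Z$). *)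

(* Defs.v *)
From HB Require Import structures.
From mathcomp Require Import all_boot all_order all_algebra.
From mathcomp Require Import all_classical all_reals all_analysis.
Set Implicit Arguments. Unset Strict Implicit. Unset Printing Implicit Defensive.
Import Order.TTheory GRing.Theory Num.Theory.
Import numFieldNormedType.Exports.
Local Open Scope classical_set_scope.
Local Open Scope ring_scope.

Section Defs.
Variables (R : realType) (n : nat).
Notation vec := 'rV[R]_n.

Definition dotv (u v : vec) : R := \sum_(i < n) u 0 i * v 0 i.
Definition sqnorm (u : vec) : R := dotv u u.

Definition polyhedron (C : set vec) : Prop :=
  exists (m : nat) (A : 'M[R]_(n, m)) (b : 'rV[R]_m),
    C = [set x | forall j : 'I_m, (x *m A) 0 j <= b 0 j].

(* Euclidean projection onto C: the (unique, for C closed convex nonempty)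
   point of C nearest to x. *)
Definition projC (C : set vec) (x : vec) : vec :=
  xget 0 [set p | C p /\ forall q, C q -> sqnorm (x - p) <= sqnorm (x - q)].

Definition orth (v : vec) : set vec := [set u | dotv u v = 0].

Definition tangent_cone (C : set vec) (th0 : vec) : set vec :=
  closure [set alpha *: (th - th0) | alpha in [set a : R | 0 <= a] & th in C].

Definition rvec d (T : measurableType d) (P : probability T R)
  (Z : 'I_n -> {RV P >-> R}) (w : T) : vec := \row_i Z i w.

Definition stat_dim d (T : measurableType d) (P : probability T R)
  (Z : 'I_n -> {RV P >-> R}) (K : set vec) : \bar R :=
  (\int[P]_w (sqnorm (projC K (rvec Z w)))%:E)%E.

End Defs.

(* Main.v *)
Require Import Defs.
From HB Require Import structures.
From mathcomp Require Import all_boot all_order all_algebra.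
From mathcomp Require Import all_classical all_reals all_analysis.
Import Order.TTheory GRing.Theory Num.Theory.
Import numFieldNormedType.Exports.
Local Open Scope classical_set_scope.
Local Open Scope ring_scope.
From mathcomp Require Import ring lra.
Set Implicit Arguments. Unset Strict Implicit. Unset Printing Implicit Defensive.
From mathcomp Require Import measurable_realfun.
Section S.
Variables (R : realType) (n : nat).
Notation vec := 'rV[R]_n.
Notation dotv := (@dotv R n).
Notation sqnorm := (@sqnorm R n).

Definition box (z : vec) (e : R) (y : vec) := forall i : 'I_n, `|y 0 i - z 0 i| < e.

Lemma nbhs_box (z : vec) (S : set vec) :
  nbhs z S <-> exists2 e : R, 0 < e & forall y, box z e y -> S y.
Proof.
rewrite nbhs_ballP; split.
- move=> [e e0 H]; exists e => // y yb; apply: H; split => // i j.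
  rewrite (ord1 i) /ball /= distrC; exact: yb.
- move=> [e e0 H]; exists e => // y [_ yb]; apply: H => i.
  have := yb 0 i; rewrite /ball /= distrC; exact.
Qed.

Lemma small_inv (x : R) : 0 < x -> exists k : nat, k.+1%:R^-1 < x.
Proof. by move=> /ltr_add_invr[k]; rewrite add0r => h; exists k. Qed.

Lemma dotvC (u v : vec) : dotv u v = dotv v u.
Proof. by rewrite /Defs.dotv; apply: eq_bigr => i _; rewrite mulrC. Qed.
Lemma dotvDl (u w v : vec) : dotv (u + w) v = dotv u v + dotv w v.
Proof. by rewrite /Defs.dotv -big_split; apply: eq_bigr => i _; rewrite mxE mulrDl. Qed.
Lemma dotvZl a (u v : vec) : dotv (a *: u) v = a * dotv u v.
Proof. by rewrite /Defs.dotv mulr_sumr; apply: eq_bigr => i _; rewrite mxE mulrA. Qed.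
Lemma dotvNl (u v : vec) : dotv (- u) v = - dotv u v.
Proof. by rewrite -scaleN1r dotvZl mulN1r. Qed.
Lemma dotvBl (u w v : vec) : dotv (u - w) v = dotv u v - dotv w v.
Proof. by rewrite dotvDl dotvNl. Qed.
Lemma dotvDr (u w v : vec) : dotv v (u + w) = dotv v u + dotv v w.
Proof. by rewrite dotvC dotvDl !(dotvC v). Qed.
Lemma dotvZr a (u v : vec) : dotv v (a *: u) = a * dotv v u.
Proof. by rewrite dotvC dotvZl dotvC. Qed.
Lemma dotvBr (u w v : vec) : dotv v (u - w) = dotv v u - dotv v w.
Proof. by rewrite dotvC dotvBl !(dotvC v). Qed.
Lemma dotv0l (v : vec) : dotv 0 v = 0.
Proof. by rewrite -(scale0r 0) dotvZl mul0r. Qed.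
Lemma dotv0r (v : vec) : dotv v 0 = 0.
Proof. by rewrite dotvC dotv0l. Qed.

Lemma sqnorm_ge0 (u : vec) : 0 <= sqnorm u.
Proof. by rewrite /Defs.sqnorm /Defs.dotv; apply: sumr_ge0 => i _; rewrite -expr2 sqr_ge0. Qed.

Lemma coord_le_sqnorm (u : vec) i : u 0 i ^+ 2 <= sqnorm u.
Proof.
rewrite /Defs.sqnorm /Defs.dotv (bigD1 i) //= -expr2 lerDl.
by apply: sumr_ge0 => j _; rewrite -expr2 sqr_ge0.
Qed.

Lemma sqnorm_eq0 (u : vec) : sqnorm u = 0 -> u = 0.
Proof.
move=> /eqP; rewrite /Defs.sqnorm /Defs.dotv psumr_eq0; last by move=> i _; rewrite -expr2 sqr_ge0.
move=> /allP H; apply/rowP => i; rewrite mxE.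
have /H : i \in index_enum 'I_n by rewrite mem_index_enum.
by rewrite /= mulf_eq0 orbb => /eqP.
Qed.

Lemma sqnormB (u w : vec) : sqnorm (u - w) = sqnorm u - 2 * dotv u w + sqnorm w.
Proof.
rewrite /Defs.sqnorm dotvBl !dotvBr (dotvC w u); ring.
Qed.
Lemma sqnormD (u w : vec) : sqnorm (u + w) = sqnorm u + 2 * dotv u w + sqnorm w.
Proof.
rewrite /Defs.sqnorm dotvDl !dotvDr (dotvC w u); ring.
Qed.
Lemma sqnormZ a (u : vec) : sqnorm (a *: u) = a ^+ 2 * sqnorm u.
Proof. by rewrite /Defs.sqnorm dotvZl dotvZr mulrA expr2. Qed.
Lemma cont_sum (F : 'I_n -> vec -> R) : (forall i, continuous (F i)) ->
  continuous (fun u => \sum_i F i u).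
Proof.
move=> Fc x.
elim: (index_enum _) => [|a s IH].
  have -> : (fun u => \sum_(i <- [::]) F i u) = fun=> 0.
    by apply: funext => u; rewrite big_nil.
  exact: cst_continuous.
have -> : (fun u => \sum_(i <- a :: s) F i u) = (fun u => F a u + \sum_(i <- s) F i u).
  by apply: funext => u; rewrite big_cons.
exact: (cvgD (Fc a x) IH).
Qed.
Lemma cont_dot (q : vec) : continuous (fun u : vec => dotv u q).
Proof.
apply: cont_sum => i x.
exact: (@cvgMr_tmp _ _ _ _ _ _ (q 0 i) (@coord_continuous _ 1 n 0 i x)).
Qed.
Lemma cont_sqn (z : vec) : continuous (fun u : vec => sqnorm (z - u)).
Proof.
apply: cont_sum => i x.
have h : continuous (fun u : vec => (z - u) 0 i).
  have -> : (fun u : vec => (z - u) 0 i) = (fun u => z 0 i - u 0 i).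
    by apply: funext => u; rewrite !mxE.
  move=> y; have h1 := (@coord_continuous _ 1 n 0 i y). have h2 := (@cst_continuous _ _ (z 0 i) y).
  exact: (cvgB h2 h1).
exact: (cvgM (h x) (h x)).
Qed.

Lemma proj_exists (K : set vec) (z : vec) : closed K -> K !=set0 ->
  exists p, K p /\ forall q, K q -> sqnorm (z - p) <= sqnorm (z - q).
Proof.
move=> cK [q0 Kq0].
set c := sqnorm (z - q0).
pose K' := K `&` [set q | sqnorm (z - q) <= c].
have cK' : closed K'.
  apply: closedI => //.
  have -> : [set q | sqnorm (z - q) <= c] = (fun q => sqnorm (z - q)) @^-1` [set x | x <= c].
    by [].
  apply: preimage_closed; last exact: closed_le.
  by move=> x _; exact: cont_sqn.
have bK' : K' `<=` [set v : vec | forall i, (fun i => `[z 0 i - (1 + c), z 0 i + (1 + c)]%classic) i (v ord0 i)].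
  move=> q [_ /= hq] i /=; rewrite in_itv /=.
  have -> : q ord0 i = q 0 i by [].
  have h1 := coord_le_sqnorm (z - q) i; rewrite !mxE in h1.
  have h2 : 0 <= c by exact: sqnorm_ge0.
  have h3 := sqr_ge0 (z 0 i - q 0 i - 1); have h4 := sqr_ge0 (z 0 i - q 0 i + 1).
  apply/andP; split; nra.
have cpK' : compact K'.
  apply: (subclosed_compact cK' _ bK').
  have hc : forall i : 'I_n, compact `[z 0 i - (1 + c), z 0 i + (1 + c)]%classic.
    move=> i; exact: segment_compact.
  have := @rV_compact R n (fun i => `[z 0 i - (1 + c), z 0 i + (1 + c)]%classic) hc.
  exact.
have K'0 : K' !=set0 by exists q0; split => //=.
have [p pK' pmin] := compact_EVT_min K'0 cpK' (continuous_subspaceT (@cont_sqn z)).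
move: pK'; rewrite inE => -[Kp pc].
exists p; split => // q Kq.
have [qc|qc] := leP (sqnorm (z - q)) c.
  by apply: pmin; rewrite inE.
by apply: le_trans pc _; apply: ltW.
Qed.

Definition cone (K : set vec) := forall u t, K u -> 0 <= t -> K (t *: u).

Lemma projC_spec (K : set vec) z : closed K -> K !=set0 ->
  K (projC K z) /\ forall q, K q -> sqnorm (z - projC K z) <= sqnorm (z - q).
Proof.
move=> cK K0; have h := (@xgetPex _ 0 [set p | K p /\ forall q, K q -> sqnorm (z - p) <= sqnorm (z - q)] (proj_exists z cK K0)).
exact: h.
Qed.

Lemma cone_dot (K : set vec) z : closed K -> K !=set0 -> cone K ->
  dotv z (projC K z) = sqnorm (projC K z).
Proof.
move=> cK K0 coK; have [Kp pmin] := projC_spec z cK K0.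
set p := projC K z in Kp pmin *.
have H : forall t, 0 <= t -> - 2 * dotv z p + sqnorm p <= - 2 * t * dotv z p + t ^+ 2 * sqnorm p.
  move=> t t0; have := pmin _ (coK _ _ Kp t0).
  rewrite !sqnormB sqnormZ dotvZr; lra.
have b0 := sqnorm_ge0 p.
have [/sqnorm_eq0 p0|bp] := eqVneq (sqnorm p) 0.
  by rewrite p0 dotv0r /Defs.sqnorm dotv0r.
have bpos : 0 < sqnorm p by rewrite lt_neqAle eq_sym bp b0.
have H0 := H 0 (lexx _).
set a := dotv z p in H H0 *; set b := sqnorm p in H H0 bp bpos b0 *.
have a0 : 0 <= a / b by apply: divr_ge0 => //; lra.
have := H _ a0.
have ab : a / b * b = a by rewrite mulfVK.
set t := a / b in a0 ab *.
rewrite -ab => h.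
have : b * (t - 1) ^+ 2 <= 0 by nra.
rewrite pmulr_rle0 // => h2.
have : (t - 1) ^+ 2 = 0 by apply: le_anti; rewrite h2 sqr_ge0.
move/eqP; rewrite sqrf_eq0 subr_eq0 => /eqP ->; by rewrite mul1r.
Qed.

Lemma proj_decomp (K : set vec) z : closed K -> K !=set0 -> cone K ->
  sqnorm (projC K z) = sqnorm z - sqnorm (z - projC K z).
Proof.
move=> cK K0 coK; have h := cone_dot z cK K0 coK.
rewrite sqnormB h; lra.
Qed.

Lemma gK_le (K : set vec) z : closed K -> K !=set0 -> cone K ->
  sqnorm (projC K z) <= sqnorm z.
Proof.
move=> cK K0 coK; rewrite proj_decomp //; have := sqnorm_ge0 (z - projC K z); lra.
Qed.

Lemma gK_mono (F K : set vec) z : closed K -> K !=set0 -> cone K ->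
  closed F -> F !=set0 -> cone F -> F `<=` K ->
  sqnorm (projC F z) <= sqnorm (projC K z).
Proof.
move=> cK K0 coK cF F0 coF FK; rewrite !proj_decomp //.
have [KF _] := projC_spec z cF F0; have [_ h] := projC_spec z cK K0.
have := h _ (FK _ KF); lra.
Qed.

Lemma gK_gt (K : set vec) z a : closed K -> K !=set0 -> cone K ->
  (a < sqnorm (projC K z)) <-> exists2 q, K q & a < 2 * dotv z q - sqnorm q.
Proof.
move=> cK K0 coK; have h := cone_dot z cK K0 coK.
have [Kp pmin] := projC_spec z cK K0.
split.
  by move=> ha; exists (projC K z) => //; rewrite h; lra.
move=> [q Kq hq]; have := pmin _ Kq; rewrite !sqnormB h; lra.
Qed.

Lemma open_gK (K : set vec) a : closed K -> K !=set0 -> cone K ->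
  open [set z | a < sqnorm (projC K z)].
Proof.
move=> cK K0 coK; rewrite openE => z /= /(gK_gt _ _ cK K0 coK) [q Kq hq].
pose f := fun y : vec => dotv y (2 *: q) - sqnorm q.
have cf : continuous f.
  move=> y; have h1 := @cont_dot (2 *: q) y; have h2 := (@cst_continuous _ _ (sqnorm q) y).
  exact: (cvgB h1 h2).
have : nbhs (f z) [set x | a < x].
  apply: open_nbhs_nbhs; split; first exact: open_gt.
  by rewrite /f /= dotvZr.
move=> /(cf z) hz.
have sub : f @^-1` [set x | a < x] `<=` [set z | a < sqnorm (projC K z)].
  move=> y /= hy; apply/(gK_gt _ _ cK K0 coK); exists q => //; move: hy; rewrite /f dotvZr.
  exact.
exact: (filterS sub hz).
Qed.

Lemma closed_orth (v : vec) : closed (orth v).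
Proof.
have -> : orth v = (fun u => dotv u v) @^-1` [set x | x = 0] by [].
apply: preimage_closed; last exact: closed_eq.
by move=> x _; exact: cont_dot.
Qed.

Lemma cone0 (K : set vec) : K !=set0 -> cone K -> K 0.
Proof. by move=> [u Ku] coK; rewrite -(scale0r u); apply: coK. Qed.

Lemma coneF (K : set vec) v : cone K -> cone (K `&` orth v).
Proof.
move=> coK u t [Ku ou] t0; split; first exact: coK.
by rewrite /orth /= dotvZl ou mulr0.
Qed.

Lemma key_gap (K : set vec) (v z : vec) (r : R) : closed K -> K !=set0 -> cone K ->
  (forall u, K u -> dotv u v <= 0) -> v != 0 -> 0 < r ->
  (forall y, box z r y -> K y) ->
  sqnorm (projC (K `&` orth v) z) + r ^+ 2 / 4 <= sqnorm (projC K z).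
Proof.
move=> cK K0 coK Kv v0 r0 zr.
set F := K `&` orth v.
have cF : closed F by apply: closedI => //; exact: closed_orth.
have F0 : F !=set0 by exists 0; split; [exact: cone0|by rewrite /orth /= dotv0l].
have coF : cone F by exact: coneF.
have Kz : K z by apply: zr => i; rewrite subrr normr0.
have hzK : sqnorm z <= sqnorm (projC K z).
  rewrite proj_decomp //; have [_ h] := projC_spec z cK K0; have := h _ Kz.
  rewrite subrr /Defs.sqnorm dotv0l; lra.
apply: le_trans hzK.
have [Fp _] := projC_spec z cF F0.
have hp1 := cone_dot z cF F0 coF.
set p := projC F z in Fp hp1 *.
have hp2 : dotv p v = 0 by case: Fp.
set s := sqnorm v.
have s0 : 0 < s.
  rewrite lt_neqAle sqnorm_ge0 andbT eq_sym; apply/eqP => /sqnorm_eq0 h.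
  by move: v0; rewrite h eqxx.
set sg := Num.sqrt s.
have sg0 : 0 < sg by rewrite sqrtr_gt0.
have sgs : sg ^+ 2 = s by rewrite sqr_sqrtr // ltW.
set a := dotv z v.
set c := a / s.
have cs : c * s = a by rewrite mulfVK // gt_eqF.
have h1 : sqnorm p <= sqnorm z - c * a.
  have e1 : dotv (z - c *: v) p = sqnorm p by rewrite dotvBl dotvZl (dotvC v) hp2 mulr0 subr0.
  have := sqnorm_ge0 ((z - c *: v) - p).
  rewrite sqnormB e1 sqnormB sqnormZ dotvZr -/a -/s.
  have -> : c ^+ 2 * s = c * a by rewrite -cs; ring.
  lra.
set t := r / (2 * sg).
have t0 : 0 < t by apply: divr_gt0 => //; apply: mulr_gt0.
have h2 : a + t * s <= 0.
  have := Kv _ (zr (z + t *: v) _).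
  rewrite dotvDl dotvZl -/a -/s; apply.
  move=> i; rewrite !mxE [z 0 i + _]addrC addrK normrM (gtr0_norm t0).
  have vi : `|v 0 i| <= sg.
    rewrite -sqrtr_sqr; apply: ler_wsqrtr; exact: coord_le_sqnorm.
  have : t * sg < r.
    have -> : t * sg = r / 2 by rewrite /t; field; rewrite gt_eqF.
    lra.
  have := ler_wpM2l (ltW t0) vi; lra.
have ts : t * s = r * sg / 2.
  rewrite /t -sgs; field; rewrite gt_eqF //.
rewrite ts in h2.
have : r ^+ 2 / 4 <= c * a.
  rewrite -cs -sgs in h2 *.
  have h3 : c * sg <= - (r / 2).
    have : sg * (c * sg + r / 2) <= 0 by nra.
    rewrite pmulr_rle0 //; lra.
  have h4 : r / 2 <= - (c * sg) by lra.
  have := ler_pM (ltW (divr_gt0 r0 (ltr0Sn _ 1))) (ltW (divr_gt0 r0 (ltr0Sn _ 1))) h4 h4.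
  have -> : c * (c * sg ^+ 2) = - (c * sg) * - (c * sg) by ring.
  have -> : r ^+ 2 / 4 = r / 2 * (r / 2) by field.
  done.
lra.
Qed.

Lemma nbhs_gt_dot (q p : vec) (c : R) : c < dotv p q -> nbhs p [set x | c < dotv x q].
Proof.
move=> h.
have : nbhs (dotv p q) [set x | c < x].
  by apply: open_nbhs_nbhs; split; [exact: open_gt | exact: h].
exact: (@cont_dot q p).
Qed.

Lemma polyh_dot (C : set vec) : polyhedron C -> exists m (qs : 'I_m -> vec) (bs : 'I_m -> R),
  C = [set x | forall j, dotv x (qs j) <= bs j].
Proof.
move=> [m [A [b ->]]]; exists m, (fun j => \row_k A k j), (fun j => b 0 j).
have e : forall x j, (x *m A) 0 j = dotv x (\row_k A k j).
  by move=> x j; rewrite !mxE /Defs.dotv; apply: eq_bigr => k _; rewrite mxE.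
by apply/seteqP; split => x /= h j; have := h j; rewrite e.
Qed.

Lemma polyh_closed (C : set vec) : polyhedron C -> closed C.
Proof.
move=> /polyh_dot [m [qs [bs ->]]] p cp j.
rewrite leNgt; apply/negP => h.
have [x [/= hx1 hx2]] := cp _ (nbhs_gt_dot h).
by have := hx1 j; rewrite leNgt hx2.
Qed.

Lemma polyh_convex (C : set vec) : polyhedron C ->
  forall x y l, C x -> C y -> 0 <= l -> l <= 1 -> C (x + l *: (y - x)).
Proof.
move=> /polyh_dot [m [qs [bs ->]]] x y l /= hx hy l0 l1 j.
rewrite dotvDl dotvZl dotvBl.
have := hx j; have := hy j; nra.
Qed.

Lemma normal_ineq (C : set vec) (th0 ths : vec) :
  (forall x y l, C x -> C y -> 0 <= l -> l <= 1 -> C (x + l *: (y - x))) ->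
  C th0 -> (forall q, C q -> sqnorm (ths - th0) <= sqnorm (ths - q)) ->
  forall th, C th -> dotv (th - th0) (ths - th0) <= 0.
Proof.
move=> cvx C0 hmin th Cth.
set w := th - th0; set v := ths - th0.
have H : forall l, 0 <= l -> l <= 1 -> 2 * l * dotv w v <= l ^+ 2 * sqnorm w.
  move=> l l0 l1; have := hmin _ (cvx _ _ _ C0 Cth l0 l1).
  have -> : ths - (th0 + l *: (th - th0)) = v - l *: w by rewrite /v /w; rewrite opprD addrA.
  rewrite (sqnormB v (l *: w)) sqnormZ dotvZr (dotvC v w) -/v; lra.
rewrite leNgt; apply/negP => a0.
set a := dotv w v in H a0; set b := sqnorm w in H.
have b0 : 0 <= b := sqnorm_ge0 w.
have ab0 : 0 < a + b by lra.
set l := a / (a + b).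
have la : l * (a + b) = a by rewrite mulfVK // gt_eqF.
have l0 : 0 < l by apply: divr_gt0.
have l1 : l <= 1 by rewrite ler_pdivrMr // mul1r; lra.
have := H l (ltW l0) l1.
move=> h.
have h2 : 2 * a <= l * b.
  have : l * (2 * a - l * b) <= 0 by nra.
  rewrite pmulr_rle0 //; lra.
have : 2 * a * (a + b) <= a * b.
  have := ler_wpM2r (ltW ab0) h2; rewrite -la; nra.
nra.
Qed.

Section TC.
Variables (C : set vec) (th0 : vec).
Hypothesis C0 : C th0.
Local Notation TC := (tangent_cone C th0).

Lemma tc_closed : closed TC.
Proof. exact: closed_closure. Qed.

Lemma tc_0 : TC 0.
Proof.
apply: subset_closure; exists 0; first by rewrite /= lexx.
by exists th0 => //; rewrite scale0r.
Qed.

Lemma tc_ne : TC !=set0.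
Proof. by exists 0; exact: tc_0. Qed.

Lemma tc_cone : cone TC.
Proof.
move=> u t Tu t0.
have [->|tn0] := eqVneq t 0; first by rewrite scale0r; exact: tc_0.
have tp : 0 < t by rewrite lt_neqAle eq_sym tn0 t0.
move=> B /nbhs_box [e e0 He].
have : nbhs u (box u (e / t)).
  apply/nbhs_box; exists (e / t); first exact: divr_gt0.
  by [].
move=> /Tu [s [[al al0 [th Cth <-]] hs]].
exists (t *: (al *: (th - th0))); split.
  exists (t * al); first by rewrite /= mulr_ge0.
  by exists th => //; rewrite scalerA.
apply: He => i; move: (hs i); rewrite !mxE -mulrBr normrM (gtr0_norm tp).
by rewrite ltr_pdivlMr // mulrC.
Qed.

Lemma tc_normal (v : vec) : (forall u, C u -> dotv (u - th0) v <= 0) ->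
  forall u, TC u -> dotv u v <= 0.
Proof.
move=> hv u Tu; rewrite leNgt; apply/negP => h.
have [x [[al al0 [th Cth <-]] /= hx]] := Tu _ (nbhs_gt_dot h).
move: hx; rewrite dotvZl => hx; have h2 := hv _ Cth.
have : al * dotv (th - th0) v <= 0 by rewrite mulr_ge0_le0.
by rewrite leNgt hx.
Qed.
End TC.
End S.

Section Meas.
Variables (R : realType) (n : nat) (d : measure_display) (T : measurableType d)
  (P : probability T R) (Z : 'I_n -> {RV P >-> R}).
Local Notation vec := 'rV[R]_n.

Lemma box_meas (c : vec) (e : R) : measurable [set w | box c e (rvec Z w)].
Proof.
have key : forall s : seq 'I_n,
    measurable [set w | forall i, i \in s -> `|Z i w - c 0 i| < e].
  elim => [|a s IH].
    by have -> : [set w | forall i, i \in [::] -> `|Z i w - c 0 i| < e] = setT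
      by apply/seteqP; split => // w _ i.
  have -> : [set w | forall i, i \in a :: s -> `|Z i w - c 0 i| < e] =
     (fun w => `|Z a w - c 0 a|) @^-1` `]-oo, e[ `&` [set w | forall i, i \in s -> `|Z i w - c 0 i| < e].
    apply/seteqP; split => w /=.
      move=> h; split; first by rewrite in_itv /= h // mem_head.
      by move=> i iS; apply: h; rewrite in_cons iS orbT.
    rewrite in_itv /= => -[ha hs] i; rewrite in_cons => /orP[/eqP -> //|]; exact: hs.
  apply: measurableI => //.
  rewrite -[X in measurable X]setTI.
  apply: (_ : measurable_fun setT (fun w => `|Z a w - c 0 a|)) => //.
    apply: measurableT_comp; first exact: normr_measurable.
    apply: measurable_funB => //; exact: measurable_funP.
have -> : [set w | box c e (rvec Z w)] = [set w | forall i, i \in enum 'I_n -> `|Z i w - c 0 i| < e].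
  apply/seteqP; split => w /= h i.
    by move=> _; have := h i; rewrite /rvec mxE.
  by rewrite /rvec mxE; apply: h; rewrite mem_enum.
exact: key.
Qed.

Definition cen (q : 'rV[rat]_n) : vec := \row_i ratr (q 0 i).

Lemma open_meas (U : set vec) : open U -> measurable [set w | U (rvec Z w)].
Proof.
move=> oU.
pose G := fun p : 'rV[rat]_n * nat => [set w | (forall y, box (cen p.1) (p.2.+1%:R^-1) y -> U y)
   /\ box (cen p.1) (p.2.+1%:R^-1) (rvec Z w)].
have -> : [set w | U (rvec Z w)] = \bigcup_p G p.
  apply/seteqP; split; last by move=> w [p _ [H1 H2]]; exact: H1.
  move=> w /= Uw.
  have : nbhs (rvec Z w) U by rewrite openE in oU; exact: oU.
  move=> /nbhs_box[e e0 He].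
  have [k hk] := small_inv (divr_gt0 e0 (ltr0Sn _ 1)).
  set r := k.+1%:R^-1 in hk *.
  have r0 : 0 < r by rewrite invr_gt0.
  have : forall i : 'I_n, exists q : rat, ratr q \in `](rvec Z w 0 i - r), (rvec Z w 0 i + r)[.
    move=> i; apply: rat_in_itvoo; lra.
  move=> /choice[f hf].
  exists (\row_i f i, k) => //; split => /=.
    move=> y yb; apply: He => i.
    have := yb i; have := hf i; rewrite in_itv /= /cen !mxE => /andP[h1 h2] h3.
    rewrite ltr_norml -/r in h3 *; move/andP: h3 => [h3 h4].
    rewrite ltr_norml; apply/andP; split; lra.
  move=> i; have := hf i; rewrite in_itv /= /cen /rvec !mxE => /andP[h1 h2].
  rewrite -/r ltr_norml; apply/andP; split; lra.
apply: countable_bigcupT_measurable; first exact: countableP.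
move=> [q k]; have [h|h] := pselect (forall y, box (cen q) (k.+1%:R^-1) y -> U y).
  have -> : G (q, k) = [set w | box (cen q) (k.+1%:R^-1) (rvec Z w)].
    by apply/seteqP; split => w /=; [case | ].
  exact: box_meas.
have -> : G (q, k) = set0.
  by apply/seteqP; split => w //= [].
exact: measurable0.
Qed.

Lemma meas_open_super (f : vec -> R) : (forall a, open [set z | a < f z]) ->
  measurable_fun setT (fun w => f (rvec Z w)).
Proof.
move=> hf; apply: (measurability _ (RGenOInfty.measurableE R)) => //.
move=> /= _ [_ [a ->] <-]; rewrite setTI.
have -> : (fun w => f (rvec Z w)) @^-1` `]a, +oo[%classic = [set w | [set z | a < f z] (rvec Z w)].
  by apply/seteqP; split => w /=; rewrite in_itv /= andbT.
exact: open_meas.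
Qed.
End Meas.

Theorem lemma3 (R : realType) (n : nat) (d : measure_display)
  (T : measurableType d) (P : probability T R)
  (Z : 'I_n -> {RV P >-> R}) (C : set 'rV[R]_n) (th0 : 'rV[R]_n) :
  polyhedron C ->
  interior C !=set0 ->
  (forall i : 'I_n, ('E_P[Z i] = 0)%E) ->
  (\int[P]_w (sqnorm (rvec Z w))%:E < +oo)%E ->
  C th0 ->
  (0 < P [set w | interior (tangent_cone C th0) (rvec Z w)])%E ->
  (ereal_sup [set s | exists ths : 'rV[R]_n, [/\ ~ C ths, projC C ths = th0 &
       s = stat_dim Z (tangent_cone C (projC C ths) `&` orth (ths - projC C ths))]]
   < stat_dim Z (tangent_cone C th0))%E.
Proof.
move=> polyC _ _ hint C0 hpos.
have cC := polyh_closed polyC; have cvx := polyh_convex polyC.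
set TC := tangent_cone C th0.
have cT : closed TC := @tc_closed _ _ C th0.
have T0 : TC !=set0 := tc_ne C0.
have coT : cone TC := tc_cone C0.
have mg : forall K : set 'rV[R]_n, closed K -> K !=set0 -> cone K ->
    measurable_fun setT (fun w => (sqnorm (projC K (rvec Z w)))%:E).
  move=> K cK K0 coK.
  have h := @meas_open_super R n d T P Z (fun z => sqnorm (projC K z)) (fun a => @open_gK R n K a cK K0 coK).
  exact: (proj2 (measurable_EFinP _ _) h).
have msq : measurable_fun setT (fun w => (sqnorm (rvec Z w))%:E).
  apply: (proj2 (measurable_EFinP _ _)).
  apply: (@meas_open_super R n d T P Z (fun z => sqnorm z)) => a.
  have -> : [set z : 'rV[R]_n | a < sqnorm z] = (fun u => sqnorm (0 - u)) @^-1` [set x | a < x].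
    apply/seteqP; split => z /=; rewrite sqnormB /Defs.sqnorm !dotv0l; lra.
  apply: open_comp; last exact: open_gt.
  by move=> x _; exact: cont_sqn.
have dT0 : (0 <= stat_dim Z TC)%E.
  by apply: integral_ge0 => w _; rewrite lee_fin sqnorm_ge0.
have dTfin : stat_dim Z TC \is a fin_num.
  rewrite ge0_fin_numE //; apply: le_lt_trans hint.
  apply: ge0_le_integral => //.
  - by move=> w _; rewrite lee_fin sqnorm_ge0.
  - exact: mg.
  - by move=> w _; rewrite lee_fin; exact: gK_le.
set yT := fine (stat_dim Z TC).
have dTE : stat_dim Z TC = yT%:E by rewrite fineK.
pose W k := [set z : 'rV[R]_n | forall y, box z (k.+1%:R^-1) y -> TC y].
pose B k := [set w | interior (W k) (rvec Z w)].
have mB : forall k, measurable (B k) by move=> k; apply: open_meas; exact: open_interior.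
have mE : measurable [set w | interior TC (rvec Z w)] by apply: open_meas; exact: open_interior.
have EB : [set w | interior TC (rvec Z w)] `<=` \bigcup_k B k.
  move=> w /= /nbhs_box [e e0 He].
  have [k hk] := small_inv (divr_gt0 e0 (ltr0Sn _ 1)).
  exists k => //; rewrite /B /=.
  apply/nbhs_box; exists (e / 2); first exact: divr_gt0.
  move=> y hy z hz; apply: He => i.
  have := hy i; have := hz i; rewrite !ltr_norml => /andP[h1 h2] /andP[h3 h4].
  move: h1 h2 h3 h4 hk; set a := k.+1%:R^-1; set b := rvec Z w 0 i; move=> h1 h2 h3 h4 hk.
  apply/andP; split; lra.
have [k Bk] : exists k, (0 < P (B k))%E.
  apply/not_existsP => hn.
  have h0 : forall k, P (B k) = 0%E.
    move=> k; apply: le_anti; rewrite measure_ge0 andbT leNgt; apply/negP => h.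
    exact: (hn k).
  have := measure_sigma_subadditive P mB mE EB.
  rewrite eseries0; last by move=> i _ _; exact: h0.
  by rewrite leNgt hpos.
pose r : R := k.+1%:R^-1.
have r0 : 0 < r by rewrite invr_gt0.
set c := r ^+ 2 / 4.
have c0 : 0 < c by apply: divr_gt0 => //; rewrite exprn_gt0.
have hB : forall w, B k w -> forall y, box (rvec Z w) r y -> TC y.
  by move=> w /interior_subset.
have PBfin : P (B k) \is a fin_num.
  by rewrite ge0_fin_numE ?measure_ge0 // (le_lt_trans (probability_le1 P (mB k))) ?ltey.
set pB := fine (P (B k)).
have PBE : P (B k) = pB%:E by rewrite fineK.
have pB0 : 0 < pB by rewrite -lte_fin -PBE.
apply: (@le_lt_trans _ _ (yT - c * pB)%:E); last first.
  by rewrite dTE lte_fin; have := mulr_gt0 c0 pB0; lra.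
apply: ub_ereal_sup => s [ths [nC pj ->]].
rewrite pj.
set v := ths - th0.
have hmin : forall q, C q -> sqnorm (ths - th0) <= sqnorm (ths - q).
  have [_ h] := projC_spec ths cC (ex_intro _ th0 C0); rewrite pj in h; exact: h.
have hn := normal_ineq cvx C0 hmin.
have Kv : forall u, TC u -> dotv u v <= 0 by move=> u Tu; exact: (tc_normal hn Tu).
have v0 : v != 0.
  apply/eqP => h; apply: nC.
  have -> : ths = th0 by apply/eqP; rewrite -subr_eq0; apply/eqP; exact: h.
  exact: C0.
set F := TC `&` orth v.
have cF : closed F by apply: closedI => //; exact: closed_orth.
have F0 : F !=set0 by exists 0; split; [exact: cone0|by rewrite /orth /= dotv0l].
have coF : cone F by exact: coneF.
have pw : forall w, sqnorm (projC F (rvec Z w)) + c * \1_(B k) w <= sqnorm (projC TC (rvec Z w)).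
  move=> w; rewrite /indic; case: (boolP (w \in B k)) => [/set_mem wB|_].
    rewrite mulr1; exact: (key_gap cT T0 coT Kv v0 r0 (hB w wB)).
  by rewrite mulr0 addr0; apply: gK_mono => //; exact: subIsetl.
have mcB : measurable_fun setT (fun w => (c * \1_(B k) w)%:E).
  apply: (proj2 (measurable_EFinP _ _)); apply: measurable_funM => //.
have hI : (stat_dim Z F + c%:E * P (B k) <= stat_dim Z TC)%E.
  rewrite /stat_dim.
  have -> : (c%:E * P (B k) = \int[P]_w (c * \1_(B k) w)%:E)%E.
    have hc : c < 0 -> (fun _ : R => B k) c = set0 by rewrite ltNge (ltW c0).
    have := integralZl_indic (m:=P) measurableT (fun _ : R => B k) c hc (mB k).
    move=> /= ->.
    by rewrite integral_indic // setIT.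
  rewrite -ge0_integralD //; last first.
  - by move=> w _; rewrite lee_fin; apply: mulr_ge0; [exact: ltW | rewrite indicE ler0n].
  - exact: mg.
  - by move=> w _; rewrite lee_fin sqnorm_ge0.
  apply: ge0_le_integral => //.
  - move=> w _; apply: adde_ge0; rewrite lee_fin ?sqnorm_ge0 //.
    by apply: mulr_ge0; [exact: ltW | rewrite indicE ler0n].
  - by apply: emeasurable_funD => //; exact: mg.
  - exact: mg.
  - by move=> w _; rewrite -EFinD lee_fin; exact: pw.
have dF0 : (0 <= stat_dim Z F)%E.
  by apply: integral_ge0 => w _; rewrite lee_fin sqnorm_ge0.
have dFfin : stat_dim Z F \is a fin_num.
  rewrite ge0_fin_numE //; apply: le_lt_trans (ltry yT); rewrite -dTE.
  apply: (le_trans _ hI); rewrite leeDl // PBE -EFinM lee_fin; exact: ltW (mulr_gt0 c0 pB0).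
move: hI; rewrite -(fineK dFfin) dTE PBE -EFinM -EFinD !lee_fin; lra.
Qed.
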